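(* Let $V, E, (v_i)_{i\in\mathbb{Z}}, \tau$ be as in the context, and let $\mathbb{P}$ be a Borel probability measure on $\Omega=[0,\infty)^E$ (product Borel $\sigma$-algebra) that admits geodesics, i.e. for all $x,y\in V$, $\mathbb{P}(\text{there exists a geodesic from }x\text{ to }y)=1$. Then with $\mathbb{P}$-probability one the geodesic graphs $\mathbb{G}_n$ converge to a directed graph $\mathbb{G}$ (that is, for each directed edge $e\in\vec E$, $\eta_n(e)$ converges as $n\to\infty$, and $\mathbb{G}$ is the directed graph with edge set $\{e:\lim_n\eta_n(e)=1\}$), and each directed path in $\mathbb{G}$ is a geodesic.
   Context: $V\subseteq\mathbb{Z}^2$ is infinite and connected in the nearest-neighbour lattice with $\mathbb{Z}^2\setminus V$ infinite and connected; $E$ is the set of nearest-neighbour edges with both endpoints in $V$. There is a doubly infinite, vertex-self-avoiding dual path $\Gamma=(e_i^* )_{i\in\mathbb{Z}}$ (dual lattice $\mathbb{Z}^2+(1/2,1/2)$, $e^*$ the dual edge bisecting $e$) such that $(V,E)$ is one of the two components of $(\mathbb{Z}^2,\mathcal{E}^2)$ with the edges $e_i$ dual to the $e_i^*$ removed; fix it and let $v_i$ be the endpoint of $e_i$ in $V$. For $\omega\in\Omega$, $\tau(\gamma)=\sum_{e\in\gamma}\omega_e$ for a finite path $\gamma$ and $\tau(x,y)$ is the infimum of $\tau(\gamma)$ over paths $\gamma$ in $(V,E)$ from $x$ to $y$; a geodesic from $x$ to $y$ is a path $\gamma$ from $x$ to $y$ with $\tau(\gamma)=\tau(x,y)$.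 Let $\vec E=\{(x,y):\{x,y\}\in E\}$. For $n\in\mathbb{Z}$ define $\eta_n\in\{0,1\}^{\vec E}$ by $\eta_n((x,y))=1$ iff $\{x,y\}$ lies in a geodesic from some vertex of $V$ to $v_n$ and $\tau(x,v_n)\ge\tau(y,v_n)$; $\mathbb{G}_n$ is the directed graph on $V$ with edge set $\{e\in\vec E:\eta_n(e)=1\}$. *)

(* Defs.v *)
From HB Require Import structures.
From mathcomp Require Import all_boot all_order all_algebra.
From mathcomp Require Import all_classical all_reals all_analysis.
Set Implicit Arguments. Unset Strict Implicit. Unset Printing Implicit Defensive.
Import Order.TTheory GRing.Theory Num.Theory.
Local Open Scope classical_set_scope.
Local Open Scope ring_scope.

Definition pt := (int * int)%type.

Definition nn (x y : pt) : Prop := `|x.1 - y.1| + `|x.2 - y.2| = 1.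

(** Undirected nearest-neighbour edges of Z^2, encoded canonically:
    (x, false) = {x, x + (1,0)},  (x, true) = {x, x + (0,1)}. *)
Definition Edge := (pt * bool)%type.
Definition eA (e : Edge) : pt := e.1.
Definition eB (e : Edge) : pt :=
  if e.2 then (e.1.1, e.1.2 + 1) else (e.1.1 + 1, e.1.2).

Definition edge_of (x y : pt) : Edge :=
  if x.1 == y.1 then ((x.1, Num.min x.2 y.2), true)
  else ((Num.min x.1 y.1, x.2), false).

(** Dual lattice Z^2 + (1/2,1/2): the code d = (a,b) stands for the dual
    vertex (a+1/2, b+1/2); dual vertices are adjacent iff their codes are nn.
    [dual_edge d d'] is the primal edge e bisected by the dual edge e* = {d,d'}. *)
Definition dual_edge (d d' : pt) : Edge :=
  if d.1 == d'.1 then ((d.1, Num.min d.2 d'.2 + 1), false)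
  else ((Num.min d.1 d'.1 + 1, d.2), true).

(** finite chains x = x_0, x_1, ..., x_k (s = [:: x_1; ...; x_k]) along r *)
Fixpoint chain (r : pt -> pt -> Prop) (x : pt) (s : seq pt) : Prop :=
  match s with
  | [::] => True
  | y :: s' => r x y /\ chain r y s'
  end.

Definition lconnected (S : set pt) : Prop :=
  forall x y, S x -> S y ->
    exists s, chain (fun a b => nn a b /\ S b) x s /\ last x s = y.

Definition lcomponent (r : pt -> pt -> Prop) (x : pt) : set pt :=
  [set y | exists s, chain r x s /\ last x s = y].

Definition inEdges (V : set pt) (e : Edge) : Prop := V (eA e) /\ V (eB e).
Definition EType (V : set pt) := {e : Edge | inEdges V e}.

(** Omega = R^E with the product (cylinder-generated) Borel sigma-algebra. *)
Definition OmegaT (V : set pt) (R : realType) := EType V -> R.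
HB.instance Definition _ V R := Choice.on (OmegaT V R).
HB.instance Definition _ V (R : realType) :=
  isPointed.Build (OmegaT V R) (fun _ => 0).
Definition cylinders (V : set pt) (R : realType) : set (set (OmegaT V R)) :=
  [set A | exists (e : EType V) (B : set R),
     measurable B /\ A = (fun w : OmegaT V R => w e) @^-1` B].
Notation Omega V R := (g_sigma_algebraType (@cylinders V R)).

Section FPP.
Variables (V : set pt) (R : realType).

(** weight of an edge of Z^2 (0 outside E; only used on edges of E) *)
Definition wt (w : EType V -> R) (e : Edge) : R :=
  match pselect (inEdges V e) with
  | left h => w (exist _ e h)
  | right _ => 0
  end.

Definition Vpath (x : pt) (s : seq pt) : Prop :=
  V x /\ chain (fun a b => nn a b /\ V b) x s.

(** passage time of the path x :: s (edges counted with multiplicity) *)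
Fixpoint tauP (w : EType V -> R) (x : pt) (s : seq pt) : R :=
  match s with
  | [::] => 0
  | y :: s' => wt w (edge_of x y) + tauP w y s'
  end.

Definition fdist (w : EType V -> R) (x y : pt) : R :=
  inf [set tauP w x s | s in [set s | Vpath x s /\ last x s = y]].

Definition geodesic (w : EType V -> R) (x : pt) (s : seq pt) (y : pt) : Prop :=
  Vpath x s /\ last x s = y /\ tauP w x s = fdist w x y.

Fixpoint hasedge (x : pt) (s : seq pt) (a b : pt) : Prop :=
  match s with
  | [::] => False
  | y :: s' => ((x = a /\ y = b) \/ (x = b /\ y = a)) \/ hasedge y s' a b
  end.

Definition dirE (x y : pt) : Prop := nn x y /\ V x /\ V y.

Definition eta_n (w : EType V -> R) (v : int -> pt) (n : int) (x y : pt) : Prop :=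
  dirE x y /\
  (exists z s, geodesic w z s (v n) /\ hasedge z s x y) /\
  fdist w y (v n) <= fdist w x (v n).

Definition Glim (w : EType V -> R) (v : int -> pt) (x y : pt) : Prop :=
  exists N : int, forall n : int, N <= n -> eta_n w v n x y.

End FPP.

(* Main.v *)
Require Import Defs.
From HB Require Import structures.
From mathcomp Require Import all_boot all_order all_algebra.
From mathcomp Require Import all_classical all_reals all_analysis.
From mathcomp Require Import zify lra.
Import Order.TTheory GRing.Theory Num.Theory.
Local Open Scope classical_set_scope.
Local Open Scope ring_scope.
Set Implicit Arguments. Unset Strict Implicit. Unset Printing Implicit Defensive.

Lemma nn_cases (a b : pt) : nn a b ->
  b = (a.1 + 1, a.2) \/ b = (a.1 - 1, a.2) \/ b = (a.1, a.2 + 1) \/ b = (a.1, a.2 - 1).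
Proof.
case: a b => [p q] [p' q']; rewrite /nn /= => h.
have : (p' = p + 1 /\ q' = q) \/ (p' = p - 1 /\ q' = q) \/ (p' = p /\ q' = q+1) \/ (p' = p /\ q' = q - 1) by lia.
by case=> [[-> ->]|[[-> ->]|[[-> ->]|[-> ->]]]]; auto.
Qed.

Lemma nn_sym a b : nn a b -> nn b a.
Proof. case: a b => [p q] [p' q']; rewrite /nn /=; lia. Qed.

Lemma nn_r (a : pt) : nn a (a.1 + 1, a.2). Proof. case: a => p q; rewrite /nn /=; lia. Qed.
Lemma nn_l (a : pt) : nn a (a.1 - 1, a.2). Proof. case: a => p q; rewrite /nn /=; lia. Qed.
Lemma nn_u (a : pt) : nn a (a.1, a.2 + 1). Proof. case: a => p q; rewrite /nn /=; lia. Qed.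
Lemma nn_d (a : pt) : nn a (a.1, a.2 - 1). Proof. case: a => p q; rewrite /nn /=; lia. Qed.

Lemma eo_r (a : pt) : edge_of a (a.1+1, a.2) = (a, false).
Proof.
case: a => p q; rewrite /edge_of /=.
have -> : (p == p + 1) = false by lia.
rewrite minElt; have -> : (p < p + 1) = true by lia. by [].
Qed.
Lemma eo_l (a : pt) : edge_of a (a.1-1, a.2) = ((a.1 - 1, a.2), false).
Proof.
case: a => p q; rewrite /edge_of /=.
have -> : (p == p - 1) = false by lia.
rewrite minElt; have -> : (p < p - 1) = false by lia. by [].
Qed.
Lemma eo_u (a : pt) : edge_of a (a.1, a.2+1) = (a, true).
Proof.
case: a => p q; rewrite /edge_of /= eqxx.
rewrite minElt; have -> : (q < q + 1) = true by lia. by [].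
Qed.
Lemma eo_d (a : pt) : edge_of a (a.1, a.2-1) = ((a.1, a.2 - 1), true).
Proof.
case: a => p q; rewrite /edge_of /= eqxx.
rewrite minElt; have -> : (q < q - 1) = false by lia. by [].
Qed.

Lemma de_r (a : pt) : dual_edge a (a.1+1, a.2) = ((a.1 + 1, a.2), true).
Proof.
case: a => p q; rewrite /dual_edge /=.
have -> : (p == p + 1) = false by lia.
rewrite minElt; have -> : (p < p + 1) = true by lia. by [].
Qed.
Lemma de_l (a : pt) : dual_edge a (a.1-1, a.2) = (a, true).
Proof.
case: a => p q; rewrite /dual_edge /=.
have -> : (p == p - 1) = false by lia.
rewrite minElt; have -> : (p < p - 1) = false by lia.
by rewrite subrK.
Qed.
Lemma de_u (a : pt) : dual_edge a (a.1, a.2+1) = ((a.1, a.2 + 1), false).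
Proof.
case: a => p q; rewrite /dual_edge /= eqxx.
rewrite minElt; have -> : (q < q + 1) = true by lia. by [].
Qed.
Lemma de_d (a : pt) : dual_edge a (a.1, a.2-1) = (a, false).
Proof.
case: a => p q; rewrite /dual_edge /= eqxx.
rewrite minElt; have -> : (q < q - 1) = false by lia. by rewrite subrK.
Qed.

Lemma eo_ends a b : nn a b ->
  (eA (edge_of a b) = a /\ eB (edge_of a b) = b) \/
  (eA (edge_of a b) = b /\ eB (edge_of a b) = a).
Proof.
case/nn_cases => [->|[->|[->|->]]].
- by rewrite eo_r /eA /eB /=; left; case: a.
- rewrite eo_l /eA /eB /=; right; case: a => p q /=; split=> //; congr (_,_); lia.
- by rewrite eo_u /eA /eB /=; left; case: a.
- rewrite eo_d /eA /eB /=; right; case: a => p q /=; split=> //; congr (_,_); lia.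
Qed.

Lemma eAB_nn e : nn (eA e) (eB e).
Proof. case: e => [[p q] []]; rewrite /eA /eB /nn /=; lia. Qed.

Lemma eo_AB e : edge_of (eA e) (eB e) = e.
Proof.
case: e => [[p q] []]; rewrite /eA /eB /=.
- by rewrite (eo_u (p,q)).
- by rewrite (eo_r (p,q)).
Qed.

Lemma eo_sym a b : nn a b -> edge_of b a = edge_of a b.
Proof.
case/nn_cases => [->|[->|[->|->]]]; case: a => p q /=.
- have e1 : (p, q) = ((p+1,q).1 - 1, (p+1,q).2) by congr (_,_); rewrite /=; lia.
  rewrite [X in edge_of _ X]e1 eo_l (eo_r (p,q)) /=; congr (_,_,_); lia.
- have -> : (p - 1, q) = ((p-1,q).1, (p-1,q).2) by [].
  have e1 : (p, q) = ((p-1,q).1 + 1, (p-1,q).2) by congr (_,_); rewrite /=; lia.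
  by rewrite [X in edge_of _ X]e1 eo_r eo_l.
- have e1 : (p, q) = ((p,q+1).1, (p,q+1).2 - 1) by congr (_,_); rewrite /=; lia.
  rewrite [X in edge_of _ X]e1 eo_d (eo_u (p,q)) /=; congr (_,_,_); lia.
- have e1 : (p, q) = ((p,q-1).1, (p,q-1).2 + 1) by congr (_,_); rewrite /=; lia.
  by rewrite [X in edge_of _ X]e1 eo_u eo_d.
Qed.

Lemma eo_BA e : edge_of (eB e) (eA e) = e.
Proof. by rewrite eo_sym ?eo_AB //; apply: eAB_nn. Qed.

Ltac bsolve := rewrite ?xpair_eqE /=; repeat (match goal with
  | |- context [@eq_op _ ?x ?y] => case: (boolP (@eq_op _ x y)) => ?
  | |- context [(?x < ?y)%R] => case: (boolP (x < y)%R) => ?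
  end; rewrite /=); (try done); lia.

Fixpoint steps (x : pt) (s : seq pt) : seq (pt * pt) :=
  if s is y :: s' then (x, y) :: steps y s' else [::].

Definition cnt (L : seq (pt * pt)) (e : Edge) : bool :=
  odd (count (fun st => edge_of st.1 st.2 == e) L).
Definition hray (i j : int) (e : Edge) : bool := (~~ e.2) && (e.1.1 == i) && (j < e.1.2).
Definition col (L : seq (pt*pt)) (d : pt) : bool :=
  odd (count (fun st => hray d.1 d.2 (edge_of st.1 st.2)) L).
Definition nnL (L : seq (pt*pt)) := forall st, st \in L -> nn st.1 st.2.
Definition closedL (L : seq (pt*pt)) :=
  forall f : pt -> bool, ~~ odd (count (fun st => f st.1 != f st.2) L).

Lemma odd_count_add (T : Type) (p q : pred T) (L : seq T) :
  odd (count p L) (+) odd (count q L) = odd (count (fun x => p x (+) q x) L).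
Proof.
elim: L => //= x L IH; rewrite !oddD !oddb -IH.
by case: (p x); case: (q x); case: (odd (count p L)); case: (odd (count q L)).
Qed.

Lemma hray_vert i j e : hray i j e (+) hray i (j+1) e = (e == ((i, j+1), false)).
Proof. case: e => [[p q] []]; rewrite /hray /=; bsolve. Qed.

Lemma col_vert L i j : col L (i,j) (+) col L (i,j+1) = cnt L ((i,j+1),false).
Proof. by rewrite /col /cnt odd_count_add /=; congr odd; apply: eq_count => st; exact: hray_vert. Qed.

Lemma horiz_pt i j a b : nn a b ->
  hray i j (edge_of a b) (+) hray (i+1) j (edge_of a b) (+) (edge_of a b == ((i+1,j),true))
  = (((a.1 == i+1) && (j < a.2)) != ((b.1 == i+1) && (j < b.2))).
Proof.
case/nn_cases => [->|[->|[->|->]]]; case: a => p q /=.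
- by rewrite (eo_r (p,q)) /hray /=; bsolve.
- by rewrite (eo_l (p,q)) /hray /=; bsolve.
- by rewrite (eo_u (p,q)) /hray /=; bsolve.
- by rewrite (eo_d (p,q)) /hray /=; bsolve.
Qed.

Lemma col_horiz L i j : nnL L -> closedL L ->
  col L (i,j) (+) col L (i+1,j) = cnt L ((i+1,j),true).
Proof.
move=> hnn hcl.
have H := hcl (fun p => (p.1 == i+1) && (j < p.2)).
rewrite -(@eq_in_count _ (fun st => hray i j (edge_of st.1 st.2) (+) hray (i+1) j (edge_of st.1 st.2)
   (+) (edge_of st.1 st.2 == ((i+1,j),true)))) in H; last first.
  by move=> st /hnn /horiz_pt.
rewrite -!odd_count_add in H.
rewrite /col /cnt /=; move: H.
by case: (odd (count _ L)); case: (odd (count _ L)); case: (odd (count _ L)).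
Qed.

Lemma col_dual L d d' : nnL L -> closedL L -> nn d d' ->
  col L d (+) col L d' = cnt L (dual_edge d d').
Proof.
move=> hnn hcl; case/nn_cases => [->|[->|[->|->]]]; case: d => i j /=.
- by rewrite (de_r (i,j)) col_horiz.
- rewrite (de_l (i,j)) addbC.
  have := @col_horiz L (i-1) j hnn hcl; rewrite subrK; exact.
- by rewrite (de_u (i,j)) col_vert.
- rewrite (de_d (i,j)) addbC.
  have := col_vert L i (j-1); rewrite subrK; exact.
Qed.

Lemma steps_mem x s st : st \in steps x s -> st.1 \in x :: s /\ st.2 \in x :: s.
Proof.
elim: s x => //= y s IH x; rewrite inE => /orP [/eqP -> | /IH [h1 h2]] /=.
- by rewrite !inE !eqxx orbT.
- by split; rewrite in_cons ?h1 ?h2 orbT.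
Qed.

Lemma odd_chg_steps (f : pt -> bool) x s :
  odd (count (fun st => f st.1 != f st.2) (steps x s)) = (f x != f (last x s)).
Proof.
elim: s x => //= [|y s IH] x; first by rewrite eqxx.
rewrite oddD oddb IH.
by case: (f x); case: (f y); case: (f (last y s)).
Qed.

Lemma steps_nn (r : pt -> Prop) x s : chain (fun a b => nn a b /\ r b) x s ->
  forall st, st \in steps x s -> nn st.1 st.2.
Proof.
elim: s x => //= y s IH x [[hxy _] hc] st; rewrite inE => /orP [/eqP -> //|].
exact: IH.
Qed.

Lemma chain_mem (r : pt -> Prop) x s : chain (fun a b => nn a b /\ r b) x s ->
  forall p, p \in s -> r p.
Proof.
elim: s x => //= y s IH x [[hxy hy] hc] p; rewrite in_cons => /orP [/eqP -> //|].
exact: (IH _ hc).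
Qed.

Definition isface (r d : pt) : bool :=
  ((d.1 == r.1 - 1) || (d.1 == r.1)) && ((d.2 == r.2 - 1) || (d.2 == r.2)).
Definition avoid (L : seq (pt * pt)) (r : pt) := forall st, st \in L -> st.1 != r /\ st.2 != r.

Lemma cnt_avoid L r e : nnL L -> avoid L r -> (eA e = r \/ eB e = r) -> cnt L e = false.
Proof.
move=> hnn hav her; rewrite /cnt (@eq_in_count _ _ pred0) ?count_pred0 //.
move=> st hst /=; apply/negP => /eqP he.
have [h1 h2] := hav st hst.
have := eo_ends (hnn st hst); rewrite he.
by case: her => -> [[? ?]|[? ?]]; subst; rewrite ?eqxx in h1 h2.
Qed.

Lemma col_step L r d d' : nnL L -> closedL L -> avoid L r -> nn d d' ->
  (eA (dual_edge d d') = r \/ eB (dual_edge d d') = r) -> col L d = col L d'.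
Proof.
move=> hnn hcl hav hdd her; have := col_dual hnn hcl hdd.
rewrite (cnt_avoid hnn hav her).
by case: (col L d); case: (col L d').
Qed.

Lemma face_col L r d : nnL L -> closedL L -> avoid L r -> isface r d -> col L d = col L r.
Proof.
move=> hnn hcl hav; case: r hav => p q hav.
have e1 : col L (p-1,q) = col L (p,q).
  apply: (col_step hnn hcl hav); first by rewrite /nn /=; lia.
  have e : (p,q) = ((p-1,q).1 + 1, (p-1,q).2) by congr (_,_); rewrite /=; lia.
  by rewrite [X in dual_edge _ X]e de_r /eA /= subrK; left.
have e2 : col L (p,q-1) = col L (p,q).
  apply: (col_step hnn hcl hav); first by rewrite /nn /=; lia.
  have e : (p,q) = ((p,q-1).1, (p,q-1).2 + 1) by congr (_,_); rewrite /=; lia.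
  by rewrite [X in dual_edge _ X]e de_u /eA /= subrK; left.
have e3 : col L (p-1,q-1) = col L (p,q-1).
  apply: (col_step hnn hcl hav); first by rewrite /nn /=; lia.
  have e : (p,q-1) = ((p-1,q-1).1 + 1, (p-1,q-1).2) by congr (_,_); rewrite /=; lia.
  by rewrite [X in dual_edge _ X]e de_r /eB /= !subrK; right.
case: d => a b; rewrite /isface /= => /andP [/orP [] /eqP -> /orP [] /eqP ->].
- by rewrite e3 e2.
- exact: e1.
- exact: e2.
- by [].
Qed.

Lemma vert_col L r r' : nnL L -> closedL L -> avoid L r -> avoid L r' -> nn r r' ->
  col L r = col L r'.
Proof.
move=> hnn hcl h h' hrr; move: h'; case/nn_cases: hrr => [->|[->|[->|->]]] h';
  case: r h h' => p q h h' /=.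
- by rewrite (face_col hnn hcl h') //= /isface /=; bsolve.
- by rewrite [RHS](face_col hnn hcl h) //= /isface /=; bsolve.
- by rewrite (face_col hnn hcl h') //= /isface /=; bsolve.
- by rewrite [RHS](face_col hnn hcl h) //= /isface /=; bsolve.
Qed.

Lemma walk_col L (P : pt -> Prop) x t : nnL L -> closedL L ->
  chain (fun a b => nn a b /\ P b) x t -> (forall r, r \in x :: t -> avoid L r) ->
  col L (last x t) = col L x.
Proof.
move=> hnn hcl; elim: t x => //= y t IH x [[hxy _] hc] hav.
rewrite IH //; last by move=> r hr; apply: hav; rewrite in_cons hr orbT.
apply/esym/vert_col => //; apply: hav; rewrite !in_cons eqxx ?orbT //.
Qed.

Lemma dual_face d d' : nn d d' ->
  isface (eA (dual_edge d d')) d /\ isface (eB (dual_edge d d')) d.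
Proof.
case/nn_cases => [->|[->|[->|->]]]; case: d => i j /=.
- by rewrite (de_r (i,j)) /eA /eB /isface /=; split; bsolve.
- by rewrite (de_l (i,j)) /eA /eB /isface /=; split; bsolve.
- by rewrite (de_u (i,j)) /eA /eB /isface /=; split; bsolve.
- by rewrite (de_d (i,j)) /eA /eB /isface /=; split; bsolve.
Qed.

Definition dlo (e : Edge) : pt := if e.2 then (e.1.1 - 1, e.1.2) else (e.1.1, e.1.2 - 1).
Definition dhi (e : Edge) : pt := e.1.

Lemma de_lohi d d' : nn d d' ->
  (d = dlo (dual_edge d d') /\ d' = dhi (dual_edge d d')) \/
  (d = dhi (dual_edge d d') /\ d' = dlo (dual_edge d d')).
Proof.
case/nn_cases => [->|[->|[->|->]]]; case: d => i j /=.
- rewrite (de_r (i,j)) /dlo /dhi /=; left; split=> //; congr (_,_); lia.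
- by rewrite (de_l (i,j)) /dlo /dhi /=; right.
- rewrite (de_u (i,j)) /dlo /dhi /=; left; split=> //; congr (_,_); lia.
- by rewrite (de_d (i,j)) /dlo /dhi /=; right.
Qed.

Lemma de_inj_u (u : int -> pt) : injective u -> (forall i, nn (u i) (u (i + 1))) ->
  forall k c, dual_edge (u k) (u (k+1)) = dual_edge (u c) (u (c+1)) -> k = c.
Proof.
move=> hinj hadj k c E.
have := de_lohi (hadj k); have := de_lohi (hadj c); rewrite E.
move: (dual_edge (u c) (u (c + 1))) => e.
case=> [[h1 h2]|[h1 h2]] [[h3 h4]|[h3 h4]].
- by apply: hinj; rewrite h1 h3.
- have e1 : k = c + 1 by apply: hinj; rewrite h3 h2.
  have e2 : k + 1 = c by apply: hinj; rewrite h4 h1.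
  lia.
- have e1 : k = c + 1 by apply: hinj; rewrite h3 h2.
  have e2 : k + 1 = c by apply: hinj; rewrite h4 h1.
  lia.
- by apply: hinj; rewrite h1 h3.
Qed.

Lemma const_nat (g : int -> bool) (lo : int) (n : nat) :
  (forall m : nat, (m < n)%N -> g (lo + m%:Z + 1) = g (lo + m%:Z)) -> g (lo + n%:Z) = g lo.
Proof.
elim: n => [|n IH] h; first by rewrite addr0.
have -> : lo + n.+1%:Z = lo + n%:Z + 1 by lia.
rewrite h // IH // => m hm; apply: h; lia.
Qed.

Lemma const_int (g : int -> bool) (lo hi : int) :
  lo <= hi -> (forall k, lo <= k -> k < hi -> g (k + 1) = g k) -> g hi = g lo.
Proof.
move=> hlh h.
have -> : hi = lo + (absz (hi - lo))%:Z by lia.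
apply: const_nat => m hm; apply: h; lia.
Qed.

Lemma flip_seg (g : int -> bool) (a b c d : int) :
  (forall k, g (k+1) = g k (+) ((k == a) (+) (k == c))) -> a < b -> b < c -> c < d ->
  g d = ~~ g b.
Proof.
move=> hg hab hbc hcd.
have e1 : g c = g b.
  apply: const_int => [|k h1 h2]; first by lia.
  rewrite hg; have -> : (k == a) = false by lia.
  have -> : (k == c) = false by lia. by rewrite /= addbF.
have e2 : g (c + 1) = ~~ g b.
  rewrite hg e1; have -> : (c == a) = false by lia. by rewrite eqxx /= addbT.
rewrite -e2; apply: const_int => [|k h1 h2]; first by lia.
rewrite hg; have -> : (k == a) = false by lia.
have -> : (k == c) = false by lia. by rewrite /= addbF.
Qed.

Lemma Vpath_mem V x s : Vpath V x s -> forall p, p \in x :: s -> V p.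
Proof.
case=> hx hc p; rewrite in_cons => /orP [/eqP -> //|]; exact: chain_mem hc p.
Qed.

Lemma count_noV (V : set pt) (S : seq (pt * pt)) e :
  ~ inEdges V e -> nnL S -> (forall st, st \in S -> V st.1 /\ V st.2) ->
  count (fun st => edge_of st.1 st.2 == e) S = 0%N.
Proof.
move=> hne hnn hV; rewrite (@eq_in_count _ _ pred0) ?count_pred0 //.
move=> st hst /=; apply/negP => /eqP he; apply: hne.
have [h1 h2] := hV st hst.
have := eo_ends (hnn st hst); rewrite he /inEdges.
by case=> [[-> ->]|[-> ->]].
Qed.

Lemma count_noV' (V : set pt) (S : seq (pt * pt)) e z :
  V z -> (z = eA e \/ z = eB e) -> nnL S ->
  (forall st, st \in S -> ~ V st.1 /\ ~ V st.2) ->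
  count (fun st => edge_of st.1 st.2 == e) S = 0%N.
Proof.
move=> hz hze hnn hV; rewrite (@eq_in_count _ _ pred0) ?count_pred0 //.
move=> st hst /=; apply/negP => /eqP he.
have [h1 h2] := hV st hst.
have := eo_ends (hnn st hst); rewrite he => ends.
by move: hz; case: hze => ->; case: ends => [[h3 h4]|[h3 h4]]; rewrite ?h3 ?h4.
Qed.

Section Crossing.
Variables (V : set pt) (u v : int -> pt).
Hypothesis hu_inj : injective u.
Hypothesis hu_adj : forall i, nn (u i) (u (i + 1)).
Hypothesis hnoE : forall i, ~ inEdges V (dual_edge (u i) (u (i + 1))).
Hypothesis hv : forall i, V (v i) /\
  (v i = eA (dual_edge (u i) (u (i + 1))) \/ v i = eB (dual_edge (u i) (u (i + 1)))).
Hypothesis hVcconn : lconnected (~` V).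

Let ge i := dual_edge (u i) (u (i + 1)).
Let oth i := if v i == eA (ge i) then eB (ge i) else eA (ge i).

Lemma oth_facts i : [/\ nn (v i) (oth i), edge_of (v i) (oth i) = ge i,
   edge_of (oth i) (v i) = ge i & ~ V (oth i)].
Proof.
have [hVi hvi] := hv i; rewrite /oth; case: eqP => [e|ne].
- rewrite e; split; [exact: eAB_nn| exact: eo_AB| exact: eo_BA|].
  move=> hB; apply: (hnoE (i := i)); split=> //; rewrite -/(ge i) -e //.
- have e : v i = eB (ge i) by case: hvi.
  rewrite e; split; [apply: nn_sym; exact: eAB_nn| exact: eo_BA| exact: eo_AB|].
  move=> hA; apply: (hnoE (i := i)); split=> //; rewrite -/(ge i) -e //.
Qed.

Lemma crossing a b c d y s1 s2 x t1 t2 : a < b -> b < c -> c < d ->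
  Vpath V y s1 -> last y s1 = v a -> Vpath V y s2 -> last y s2 = v c ->
  Vpath V x t1 -> last x t1 = v b -> Vpath V x t2 -> last x t2 = v d ->
  exists p, (p \in y :: s1 \/ p \in y :: s2) /\ (p \in x :: t1 \/ p \in x :: t2).
Proof.
move=> hab hbc hcd hs1 ls1 hs2 ls2 ht1 lt1 ht2 lt2.
case: (pselect (exists p, (p \in y :: s1 \/ p \in y :: s2) /\ (p \in x :: t1 \/ p \in x :: t2)))
  => // hno; exfalso.
have [nnc eoc eoc' nVc] := oth_facts c.
have [nna eoa eoa' nVa] := oth_facts a.
have [q [hq lq]] := hVcconn nVc nVa.
pose L := steps y s2 ++ (v c, oth c) :: steps (oth c) q ++ (oth a, v a) :: steps y s1.
have memL st : st \in L -> st \in steps y s2 \/ st = (v c, oth c) \/ st \in steps (oth c) q \/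
     st = (oth a, v a) \/ st \in steps y s1.
  rewrite !(mem_cat, in_cons) => /orP [h|/orP [/eqP h|/orP [h|/orP [/eqP h| h]]]]; tauto.
have [_ hs1c] := hs1; have [_ hs2c] := hs2.
have hnn : nnL L.
  move=> st /memL [h|[->|[h|[->|h]]]] /=.
  - exact: steps_nn hs2c _ h.
  - exact: nnc.
  - exact: steps_nn hq _ h.
  - exact: nn_sym.
  - exact: steps_nn hs1c _ h.
have hcl : closedL L.
  move=> f; rewrite /L count_cat /= count_cat /= !oddD !oddb !odd_chg_steps ls1 ls2 lq /=.
  by case: (f y); case: (f (v c)); case: (f (oth c)); case: (f (oth a)); case: (f (v a)).
have qnV : forall p, p \in oth c :: q -> ~ V p.
  move=> p; rewrite in_cons => /orP [/eqP -> //|]; exact: chain_mem hq p.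
have hcnt k : cnt L (ge k) = (k == a) (+) (k == c).
  have [hVk hvk] := hv k.
  have c1 : count (fun st => edge_of st.1 st.2 == ge k) (steps y s2) = 0%N.
    apply: (count_noV (hnoE (i := k))).
    - by move=> st h; apply: steps_nn hs2c _ h.
    - by move=> st /steps_mem [h1 h2]; split; apply: (Vpath_mem hs2).
  have c2 : count (fun st => edge_of st.1 st.2 == ge k) (steps y s1) = 0%N.
    apply: (count_noV (hnoE (i := k))).
    - by move=> st h; apply: steps_nn hs1c _ h.
    - by move=> st /steps_mem [h1 h2]; split; apply: (Vpath_mem hs1).
  have c3 : count (fun st => edge_of st.1 st.2 == ge k) (steps (oth c) q) = 0%N.
    apply: (count_noV' hVk hvk).
    - by move=> st h; apply: steps_nn hq _ h.
    - by move=> st /steps_mem [h1 h2]; split; apply: qnV.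
  rewrite /cnt /L count_cat /= count_cat /= c1 c2 c3.
  rewrite /= eoc eoa' !addn0 add0n oddD !oddb.
  have E z : (ge z == ge k) = (k == z).
    apply/eqP/eqP => [h|->//]; apply/esym; exact: (de_inj_u hu_inj hu_adj h).
  by rewrite !E addbC.
have badL st : st \in L -> forall z, z = st.1 \/ z = st.2 ->
    z \in y :: s1 \/ z \in y :: s2 \/ ~ V z.
  move=> /memL [h|[->|[h|[->|h]]]] z hz.
  - have [h1 h2] := steps_mem h; by right; left; case: hz => ->.
  - case: hz => -> /=; last by right; right.
    by right; left; rewrite -ls2 mem_last.
  - have [h1 h2] := steps_mem h; by right; right; apply: qnV; case: hz => ->.
  - case: hz => -> /=; first by right; right.
    by left; rewrite -ls1 mem_last.
  - have [h1 h2] := steps_mem h; by left; case: hz => ->.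
have havd (t : seq pt) : Vpath V x t ->
    (forall r, r \in x :: t -> r \in x :: t1 \/ r \in x :: t2) ->
    forall r, r \in x :: t -> avoid L r.
  move=> ht hsub r hr st hst.
  have key z : z = st.1 \/ z = st.2 -> z != r.
    move=> hz; apply/eqP => hzr; rewrite hzr in hz.
    case: (badL st hst r hz) => [h|[h|h]].
    - by apply: hno; exists r; split; [left| exact: hsub].
    - by apply: hno; exists r; split; [right| exact: hsub].
    - exact: h (Vpath_mem ht hr).
  by split; apply: key; [left|right].
have hav1 := havd t1 ht1 (fun r h => or_introl h).
have hav2 := havd t2 ht2 (fun r h => or_intror h).
have [_ ht1c] := ht1; have [_ ht2c] := ht2.
have cb : col L (v b) = col L x by rewrite -lt1; apply: walk_col ht1c hav1.
have cd : col L (v d) = col L x by rewrite -lt2; apply: walk_col ht2c hav2.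
have fb : col L (u b) = col L (v b).
  apply: face_col => //; first by apply: hav1; rewrite -lt1 mem_last.
  have [_ hvb] := hv b; have [f1 f2] := dual_face (hu_adj b); by case: hvb => ->.
have fd : col L (u d) = col L (v d).
  apply: face_col => //; first by apply: hav2; rewrite -lt2 mem_last.
  have [_ hvd] := hv d; have [f1 f2] := dual_face (hu_adj d); by case: hvd => ->.
have hg k : col L (u (k+1)) = col L (u k) (+) ((k == a) (+) (k == c)).
  rewrite -hcnt; have := col_dual hnn hcl (hu_adj k); rewrite -/(ge k) => <-.
  by case: (col L (u k)); case: (col L (u (k+1))).
have := flip_seg (g := fun k => col L (u k)) hg hab hbc hcd.
rewrite /= fd cd fb cb; by case: (col L x).
Qed.
End Crossing.

Section FPPproofs.
Variables (V : set pt) (R : realType) (w : EType V -> R).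
Hypothesis hw0 : forall e, 0 <= w e.
Hypothesis hgeo : forall x y, V x -> V y -> exists s, geodesic w x s y.

Lemma wt_ge0 e : 0 <= wt w e.
Proof. by rewrite /wt; case: pselect. Qed.

Lemma tauP_ge0 x s : 0 <= tauP w x s.
Proof. elim: s x => //= y s IH x; apply: addr_ge0 => //; exact: wt_ge0. Qed.

Lemma tauP_cat x s1 s2 : tauP w x (s1 ++ s2) = tauP w x s1 + tauP w (last x s1) s2.
Proof. elim: s1 x => /= [|y s1 IH] x; first by rewrite add0r. by rewrite IH addrA. Qed.

Lemma chain_cat (r : pt -> pt -> Prop) x s1 s2 :
  chain r x (s1 ++ s2) <-> chain r x s1 /\ chain r (last x s1) s2.
Proof.
elim: s1 x => /= [|y s1 IH] x; first by split=> // [[]].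
rewrite IH; tauto.
Qed.

Lemma fdist_le x s : Vpath V x s -> fdist w x (last x s) <= tauP w x s.
Proof.
move=> hp; rewrite /fdist.
have := @ge_inf R [set tauP w x s0 | s0 in [set s0 | Vpath V x s0 /\ last x s0 = last x s]].
apply.
- exists 0 => r [s0 _ <-]; exact: tauP_ge0.
- by exists s.
Qed.

Lemma geo_eq x s y : geodesic w x s y -> tauP w x s = fdist w x y.
Proof. by case=> _ []. Qed.

Lemma fdist_tri x y z : V x -> V y -> V z -> fdist w x z <= fdist w x y + fdist w y z.
Proof.
move=> hx hy hz.
have [s1 [hp1 [l1 t1]]] := hgeo hx hy.
have [s2 [hp2 [l2 t2]]] := hgeo hy hz.
have hp : Vpath V x (s1 ++ s2).
  split; first by case: hp1.
  apply/chain_cat; split; first by case: hp1.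
  by rewrite l1; case: hp2.
have := fdist_le hp; rewrite last_cat l1 l2 tauP_cat l1 t1 t2; exact.
Qed.

Lemma fdist_edge a b z : nn a b -> V a -> V b -> V z ->
  fdist w a z <= wt w (edge_of a b) + fdist w b z.
Proof.
move=> hab ha hb hz.
have [s [hp [l t]]] := hgeo hb hz.
have hp' : Vpath V a (b :: s) by split=> //=; split=> //; case: hp.
have := fdist_le hp'; rewrite /= l t; exact.
Qed.

Lemma fdist_ge0 x y : V x -> V y -> 0 <= fdist w x y.
Proof.
move=> hx hy; have [s [hp [l t]]] := hgeo hx hy; rewrite -t; exact: tauP_ge0.
Qed.

Lemma split_mem (p x : pt) s : p \in x :: s -> exists s1 s2, s = s1 ++ s2 /\ last x s1 = p.
Proof.
elim: s x => [|y s IH] x; rewrite in_cons.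
- by move=> /orP [/eqP ->|//]; exists [::], [::].
- move=> /orP [/eqP ->|]; first by exists [::], (y :: s).
  move=> /IH [s1 [s2 [-> l]]]; by exists (y :: s1), s2.
Qed.

Lemma geo_mid x s y p : geodesic w x s y -> p \in x :: s ->
  fdist w x y = fdist w x p + fdist w p y.
Proof.
move=> [hp [l t]] hps.
have hV := Vpath_mem hp hps.
have [s1 [s2 [e lp]]] := split_mem hps.
rewrite e in hp l t; subst p.
have [hx hc] := hp; move: hc => /chain_cat [c1 c2].
have h1 := @fdist_le x s1 (conj hx c1).
have hVl : V (last x s1) by [].
have h2 := @fdist_le (last x s1) s2 (conj hVl c2).
rewrite last_cat in l; rewrite tauP_cat in t.
rewrite l in h2.
have hy : V y by rewrite -l; apply: (Vpath_mem (conj hVl c2)); exact: mem_last.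
have := fdist_tri hx hV hy.
lra.
Qed.

Definition Zp (x y t : pt) := fdist w x t = wt w (edge_of x y) + fdist w y t.

Lemma geo_edge z s1 b s2 t : geodesic w z (s1 ++ b :: s2) t ->
  fdist w (last z s1) t = wt w (edge_of (last z s1) b) + fdist w b t.
Proof.
move=> hg.
have hmem : last z s1 \in z :: s1 ++ b :: s2.
  by rewrite -cat_cons mem_cat mem_last.
have e1 := geo_mid hg hmem.
have [[hz hc] [l t0]] := hg.
move: hc => /chain_cat [c1 /= [[hab hb] c2]].
have hVa : V (last z s1) by apply: (Vpath_mem (conj hz c1)); exact: mem_last.
rewrite last_cat /= in l.
have hVt : V t by rewrite -l; apply: (Vpath_mem (conj hb c2)); exact: mem_last.
rewrite tauP_cat /= in t0.
have h1 := @fdist_le z s1 (conj hz c1).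
have h2 := @fdist_le b s2 (conj hb c2).
rewrite l in h2.
have h3 := fdist_edge hab hVa hb hVt.
lra.
Qed.

Lemma hasedge_split z s a b : hasedge z s a b ->
  exists (s1 : seq pt) (c d : pt) (s2 : seq pt), s = s1 ++ d :: s2 /\ last z s1 = c /\ ((c = a /\ d = b) \/ (c = b /\ d = a)).
Proof.
elim: s z => //= y s IH z [h|h].
- by exists [::], z, y, s.
- have [s1 [c [d [s2 [e [l h']]]]]] := IH _ h.
  by exists (y :: s1), c, d, s2; rewrite e.
Qed.

Lemma eta_Z (v : int -> pt) n x y : V (v n) -> eta_n w v n x y -> Zp x y (v n).
Proof.
move=> hvn [[hxy [hx hy]] [[z [s [hg he]]] hle]].
have [s1 [c [d [s2 [e [l hcd]]]]]] := hasedge_split he.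
rewrite e in hg.
have := geo_edge hg; rewrite l /Zp.
case: hcd => [[-> ->]|[-> ->]] //.
rewrite (eo_sym hxy) => h.
have := wt_ge0 (edge_of x y).
have := fdist_edge hxy hx hy hvn.
lra.
Qed.

Lemma Z_eta (v : int -> pt) n x y : V (v n) -> dirE V x y -> Zp x y (v n) -> eta_n w v n x y.
Proof.
move=> hvn [hxy [hx hy]] hZ.
have [s [hp [l t]]] := hgeo hy hvn.
split; first by [].
split.
- exists x, (y :: s); split; last by left; left.
  split; first by split=> //=; split=> //; case: hp.
  by split=> //=; rewrite t -hZ.
- have := wt_ge0 (edge_of x y); rewrite /Zp in hZ; lra.
Qed.

End FPPproofs.

Lemma ev_const (Z : int -> Prop) :
  (forall n1 m1 n2 m2 : int, n1 < m1 -> m1 < n2 -> n2 < m2 -> Z n1 -> Z n2 -> Z m1 \/ Z m2) ->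
  (exists N : int, forall n : int, N <= n -> Z n) \/
  (exists N : int, forall n : int, N <= n -> ~ Z n).
Proof.
move=> H.
case: (pselect (exists N : int, forall n : int, N <= n -> Z n)) => [h|h1]; first by left.
case: (pselect (exists N : int, forall n : int, N <= n -> ~ Z n)) => [h|h2]; first by right.
exfalso.
have A N : exists n, N <= n /\ ~ Z n.
  apply: contrapT => hA; apply: h1; exists N => n hn; apply: contrapT => hz.
  by apply: hA; exists n.
have B N : exists n, N <= n /\ Z n.
  apply: contrapT => hB; apply: h2; exists N => n hn hz.
  by apply: hB; exists n.
have [n1 [_ z1]] := B 0.
have [m1 [hm1 z2]] := A (n1 + 1).
have [n2 [hn2 z3]] := B (m1 + 1).
have [m2 [hm2 z4]] := A (n2 + 1).
have : Z m1 \/ Z m2 by apply: (H n1 m1 n2 m2) => //; lia.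
by case.
Qed.

Section Det.
Variables (V : set pt) (R : realType) (u v : int -> pt).
Hypothesis hu_inj : injective u.
Hypothesis hu_adj : forall i, nn (u i) (u (i + 1)).
Hypothesis hnoE : forall i, ~ inEdges V (dual_edge (u i) (u (i + 1))).
Hypothesis hv : forall i, V (v i) /\
  (v i = eA (dual_edge (u i) (u (i + 1))) \/ v i = eB (dual_edge (u i) (u (i + 1)))).
Hypothesis hVcconn : lconnected (~` V).
Variable (w : EType V -> R).
Hypothesis hw0 : forall e, 0 <= w e.
Hypothesis hgeo : forall x y, V x -> V y -> exists s, geodesic w x s y.

Lemma cross_Z x y N M b a p : dirE V x y ->
  geodesic w y b (v N) -> geodesic w x a (v M) -> p \in y :: b -> p \in x :: a ->
  Zp w x y (v N) -> Zp w x y (v M).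
Proof.
move=> [hxy [hx hy]] gb ga pb pa; rewrite /Zp => hZ.
have hp : V p by apply: (Vpath_mem (proj1 gb)).
have hN := proj1 (hv N); have hM := proj1 (hv M).
have e1 := geo_mid hw0 hgeo gb pb.
have e2 := geo_mid hw0 hgeo ga pa.
have t1 := fdist_tri hw0 hgeo hx hp hN.
have t2 := fdist_tri hw0 hgeo hy hp hM.
have t3 := fdist_edge hw0 hgeo hxy hx hy hM.
lra.
Qed.

Lemma Zcross x y : dirE V x y ->
  forall n1 m1 n2 m2 : int, n1 < m1 -> m1 < n2 -> n2 < m2 ->
  Zp w x y (v n1) -> Zp w x y (v n2) -> Zp w x y (v m1) \/ Zp w x y (v m2).
Proof.
move=> hd n1 m1 n2 m2 h1 h2 h3 z1 z2.
have [_ [hx hy]] := hd.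
have [b1 gb1] := hgeo hy (proj1 (hv n1)).
have [b2 gb2] := hgeo hy (proj1 (hv n2)).
have [a1 ga1] := hgeo hx (proj1 (hv m1)).
have [a2 ga2] := hgeo hx (proj1 (hv m2)).
have [p [pb pa]] := crossing hu_inj hu_adj hnoE hv hVcconn h1 h2 h3
  (proj1 gb1) (proj1 (proj2 gb1)) (proj1 gb2) (proj1 (proj2 gb2))
  (proj1 ga1) (proj1 (proj2 ga1)) (proj1 ga2) (proj1 (proj2 ga2)).
case: pa => pa.
- left; case: pb => pb; [exact: (cross_Z hd gb1 ga1 pb pa z1)|exact: (cross_Z hd gb2 ga1 pb pa z2)].
- right; case: pb => pb; [exact: (cross_Z hd gb1 ga2 pb pa z1)|exact: (cross_Z hd gb2 ga2 pb pa z2)].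
Qed.

Lemma part1 x y : dirE V x y ->
  (exists N : int, forall n : int, N <= n -> eta_n w v n x y) \/
  (exists N : int, forall n : int, N <= n -> ~ eta_n w v n x y).
Proof.
move=> hd.
have E n : eta_n w v n x y <-> Zp w x y (v n).
  split; [exact: (eta_Z hw0 hgeo (proj1 (hv n)))|exact: (Z_eta hw0 hgeo (proj1 (hv n)) hd)].
case: (ev_const (Zcross hd)) => [[N hN]|[N hN]]; [left|right]; exists N => n hn.
- by apply/E; apply: hN.
- by move/E; apply: hN.
Qed.

Lemma part2_aux x s : V x -> chain (Glim w v) x s ->
  Vpath V x s /\ exists N : int, forall n, N <= n ->
    tauP w x s = fdist w x (v n) - fdist w (last x s) (v n).
Proof.
elim: s x => [|y s IH] x hx /=.
- move=> _; split; first by split.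
  by exists 0 => n _; rewrite subrr.
- move=> [[N1 hN1] hc].
  have [[hxy [_ hy]] _] := hN1 N1 (lexx _).
  have [[_ hc'] [N2 hN2]] := IH y hy hc.
  split; first by split=> //=; split.
  exists (Num.max N1 N2) => n hn.
  move: hn; rewrite ge_max => /andP [h1 h2].
  have hZ := eta_Z hw0 hgeo (proj1 (hv n)) (hN1 n h1).
  rewrite /Zp in hZ; rewrite (hN2 n h2) hZ.
  lra.
Qed.

Lemma part2 x s : V x -> chain (Glim w v) x s -> geodesic w x s (last x s).
Proof.
move=> hx hc; have [hp [N hN]] := part2_aux hx hc.
split=> //; split=> //.
have hL : V (last x s) by apply: (Vpath_mem hp); exact: mem_last.
have h1 := fdist_le hw0 hp.
have h2 := fdist_tri hw0 hgeo hx hL (proj1 (hv N)).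
have h3 := hN N (lexx _).
lra.
Qed.

End Det.

Unset Implicit Arguments.

Theorem theorem1p2 (R : realType) (V : set pt) (u : int -> pt) (v : int -> pt)
  (* V infinite and connected, Z^2 \ V infinite and connected *)
  (hVinf : ~ finite_set V) (hVcinf : ~ finite_set (~` V))
  (hVconn : lconnected V) (hVcconn : lconnected (~` V))
  (* Gamma = (e_i^* ) : doubly infinite vertex-self-avoiding dual path with
     dual vertices u i, e_i^* = {u i, u (i+1)} *)
  (hu_inj : injective u) (hu_adj : forall i : int, nn (u i) (u (i + 1)))
  (* (V,E) is one of the two components of Z^2 with the e_i removed *)
  (hcompV : exists x0, V x0 /\
     V = lcomponent (fun a b => nn a b /\
            forall i : int, edge_of a b <> dual_edge (u i) (u (i + 1))) x0)
  (hcompVc : exists x1, ~ V x1 /\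
     ~` V = lcomponent (fun a b => nn a b /\
            forall i : int, edge_of a b <> dual_edge (u i) (u (i + 1))) x1)
  (hnoE : forall i : int, ~ inEdges V (dual_edge (u i) (u (i + 1))))
  (* v i is the endpoint of e_i in V *)
  (hv : forall i : int, V (v i) /\
     (v i = eA (dual_edge (u i) (u (i + 1))) \/
      v i = eB (dual_edge (u i) (u (i + 1)))))
  (P : probability (Omega V R) R)
  (* P lives on [0,oo)^E *)
  (hP0 : {ae P, forall w : Omega V R, forall e, 0 <= w e})
  (* P admits geodesics *)
  (hgeo : forall x y, V x -> V y ->
     {ae P, forall w : Omega V R, exists s, geodesic w x s y}) :
  {ae P, forall w : Omega V R,
     (forall x y, dirE V x y ->
        (exists N : int, forall n : int, N <= n -> eta_n w v n x y) \/
        (exists N : int, forall n : int, N <= n -> ~ eta_n w v n x y)) /\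
     (forall x s, V x -> chain (Glim w v) x s -> geodesic w x s (last x s))}.
Proof.
have hgood : {ae P, forall w : Omega V R, forall n : nat,
   match (unpickle n : option (pt * pt)) with
   | Some xy => V xy.1 -> V xy.2 -> exists s, geodesic w xy.1 s xy.2
   | None => True end}.
  apply: ae_foralln => n.
  case: (unpickle n) => [[x y]|]; last exact: aeW.
  case: (pselect (V x)) => hx; last by apply: aeW => w /= /hx.
  case: (pselect (V y)) => hy; last by apply: aeW => w /= _ /hy.
  by apply: filterS (hgeo x y hx hy) => w h _ _.
apply: filterS2 hP0 hgood => w h0 hg.
have hgeo' : forall x y, V x -> V y -> exists s, geodesic w x s y.
  move=> x y hx hy; have := hg (pickle (x, y)); rewrite pickleK /=; exact.
split.
- move=> x y; exact: (part1 hu_inj hu_adj hnoE hv hVcconn h0 hgeo').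
- move=> x s hx; exact: (part2 hv h0 hgeo').
Qed.
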